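(* Let $N\ge2$, $M\ge2$ and $Q$ be integers with $1\le Q\le M-1$, write $\mathcal{M}=\{1,\dots,M\}$, let $0<\epsilon<1$, and let $\mathbf{H}_1,\dots,\mathbf{H}_M$ be $N\times N$ real symmetric positive semidefinite matrices. Let $v^{\max}_{\rm QP}$ be the optimal value of (P2): maximize $\|\mathbf{w}\|^2$ over $\mathbf{w}\in\mathbb{R}^N$, $\boldsymbol\beta\in\{0,1\}^M$ subject to $\mathbf{w}^T\mathbf{H}_i\mathbf{w}\le\beta_i\epsilon+(1-\beta_i)$ ($i\in\mathcal{M}$) and $\sum_i\beta_i=Q$; and let $v^{\max}_{\rm SDP}$ be the optimal value of (SDP3): maximize $\mathrm{Tr}[\mathbf{X}]$ over real symmetric $N\times N$ matrices $\mathbf{X}\succeq0$ and $\boldsymbol\beta\in\mathbb{R}^M$ subject to $\mathrm{Tr}[\mathbf{H}_i\mathbf{X}]\le\beta_i\epsilon+(1-\beta_i)$ ($i\in\mathcal{M}$), $\sum_i\beta_i=Q$, $0\le\beta_i\le1$. Then $$v^{\max}_{\rm QP}\ge\frac{\epsilon}{\tilde c(\epsilon)}\cdot\frac{1}{200\ln(50K)}\,v^{\max}_{\rm SDP},$$ where $K=\sum_{i=1}^M\min\{\mathrm{rank}(\mathbf{H}_i),\sqrt{2M}\}$ and $\tilde c(\epsilon)=1-\frac{1-\epsilon}{M-Q+1}$. *)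

(* Defs.v *)
From HB Require Import structures.
From mathcomp Require Import all_boot all_order all_algebra.
From mathcomp Require Import all_classical all_reals all_analysis.
Set Implicit Arguments. Unset Strict Implicit. Unset Printing Implicit Defensive.
Import Order.TTheory GRing.Theory Num.Theory.
Local Open Scope ring_scope.
Local Open Scope classical_set_scope.

Definition psd (R : realType) (N : nat) (A : 'M[R]_N) : Prop :=
  A^T = A /\ forall x : 'cV[R]_N, 0 <= (x^T *m A *m x) ord0 ord0.

Definition qform (R : realType) (N : nat) (A : 'M[R]_N) (w : 'cV[R]_N) : R :=
  (w^T *m A *m w) ord0 ord0.

Definition sqnorm (R : realType) (N : nat) (w : 'cV[R]_N) : R :=
  \sum_(j < N) (w j ord0) ^+ 2.

Definition v_QP (R : realType) (N M Q : nat) (eps : R) (H : 'I_M -> 'M[R]_N)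
  : \bar R :=
  ereal_sup [set ((sqnorm w)%:E) | w in
    [set w : 'cV[R]_N | exists beta : 'I_M -> bool,
       (forall i, qform (H i) w <= (beta i)%:R * eps + (1 - (beta i)%:R)) /\
       \sum_(i < M) ((beta i)%:R : R) = Q%:R]].

Definition v_SDP (R : realType) (N M Q : nat) (eps : R) (H : 'I_M -> 'M[R]_N)
  : \bar R :=
  ereal_sup [set ((\tr X)%:E) | X in
    [set X : 'M[R]_N | psd X /\ exists beta : 'I_M -> R,
       (forall i, \tr (H i *m X) <= beta i * eps + (1 - beta i)) /\
       \sum_(i < M) beta i = Q%:R /\
       (forall i, 0 <= beta i <= 1)]].

Definition K_of (R : realType) (N M : nat) (H : 'I_M -> 'M[R]_N) : R :=
  \sum_(i < M) Num.min ((\rank (H i))%:R) (Num.sqrt (2 * M%:R)).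

Definition ctilde (R : realType) (M Q : nat) (eps : R) : R :=
  1 - (1 - eps) / (M - Q + 1)%:R.

(* Main.v *)
Set Warnings "-all".
Require Import Defs.
From HB Require Import structures.
From mathcomp Require Import all_boot all_order all_algebra.
From mathcomp Require Import all_classical all_reals all_analysis.
From mathcomp Require Import ring lra zify.
Import Order.TTheory GRing.Theory Num.Theory.
Local Open Scope ring_scope.

Section Main.
Variable R : realType.
Implicit Types (F G : (nat -> R) -> R).

Definition scons (x : R) (s : nat -> R) : nat -> R :=
  fun k => if k is k'.+1 then s k' else x.

Fixpoint Ex (n : nat) (F : (nat -> R) -> R) : R :=
  match n with
  | 0 => F (fun _ => 0)
  | n'.+1 => (Ex n' (fun s => F (scons 1 s)) + Ex n' (fun s => F (scons (-1) s))) / 2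
  end.

Lemma Ex_ext n F G : (forall s, F s = G s) -> Ex n F = Ex n G.
Proof.
elim: n F G => [|n IH] F G h /=; first exact: h.
by congr ((_ + _) / 2); apply: IH => s; apply: h.
Qed.

Lemma Ex_le n F G : (forall s, F s <= G s) -> Ex n F <= Ex n G.
Proof.
elim: n F G => [|n IH] F G h /=; first exact: h.
have h1 := IH (fun s => F (scons 1 s)) (fun s => G (scons 1 s)) (fun s => h _).
have h2 := IH (fun s => F (scons (-1) s)) (fun s => G (scons (-1) s)) (fun s => h _).
timeout 20 lra.
Qed.

Lemma ExD n F G : Ex n (fun s => F s + G s) = Ex n F + Ex n G.
Proof.
elim: n F G => [|n IH] F G //=.
rewrite (IH (fun s => F (scons 1 s))) (IH (fun s => F (scons (-1) s))).
timeout 20 lra.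
Qed.

Lemma ExZ n c F : Ex n (fun s => c * F s) = c * Ex n F.
Proof.
elim: n F => [|n IH] F //=.
rewrite (IH (fun s => F (scons 1 s))) (IH (fun s => F (scons (-1) s))).
timeout 20 ring.
Qed.

Lemma Ex_cst n c : Ex n (fun _ => c) = c.
Proof. elim: n => [|n IH] //=; rewrite IH; timeout 20 lra. Qed.

Lemma Ex_sum n (I : Type) (r : seq I) (P : pred I) (f : I -> (nat -> R) -> R) :
  Ex n (fun s => \sum_(i <- r | P i) f i s) = \sum_(i <- r | P i) Ex n (f i).
Proof.
elim: r => [|x r IH].
  by rewrite big_nil (Ex_ext _ _ (fun _ => 0)) ?Ex_cst // => s; rewrite big_nil.
rewrite big_cons; case hP: (P x) => /=.
  by rewrite -IH -ExD; apply: Ex_ext => s; rewrite big_cons hP.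
by rewrite -IH; apply: Ex_ext => s; rewrite big_cons hP.
Qed.

Lemma Ex_exists n F : exists s, Ex n F <= F s.
Proof.
elim: n F => [|n IH] F /=; first by exists (fun _ => 0).
have [s1 h1] := IH (fun s => F (scons 1 s)).
have [s2 h2] := IH (fun s => F (scons (-1) s)).
case: (lerP (Ex n (fun s => F (scons 1 s))) (Ex n (fun s => F (scons (-1) s)))) => hh.
  exists (scons (-1) s2); timeout 20 lra.
exists (scons 1 s1); timeout 20 lra.
Qed.

Lemma Ex_S n F : Ex n.+1 F = (Ex n (fun s => F (scons 1 s)) + Ex n (fun s => F (scons (-1) s))) / 2.
Proof. by []. Qed.

Lemma Ex_avg n F G : (Ex n F + Ex n G) / 2 = Ex n (fun s => (F s + G s) / 2).
Proof.
rewrite [RHS](Ex_ext _ _ (fun s => 2^-1 * (F s + G s))); last by move=> s; exact: mulrC.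
by rewrite ExZ ExD mulrC.
Qed.

Lemma sum_scons n x s (a : nat -> R) :
  \sum_(k < n.+1) scons x s k * a k = x * a 0%N + \sum_(k < n) s k * a k.+1.
Proof.
rewrite big_ord_recl /=; congr (_ + _).
Qed.

Lemma Ex_sq n (a : nat -> R) :
  Ex n (fun s => (\sum_(k < n) s k * a k) ^+ 2) = \sum_(k < n) a k ^+ 2.
Proof.
elim: n a => [|n IH] a; first by rewrite /= !big_ord0 expr0n.
rewrite [LHS]/= (Ex_ext _ (fun s => (\sum_(k < n.+1) scons 1 s k * a k) ^+ 2)
  (fun s => (1 * a 0%N + \sum_(k < n) s k * a k.+1) ^+ 2));
  last by move=> s; rewrite sum_scons.
rewrite (Ex_ext _ (fun s => (\sum_(k < n.+1) scons (-1) s k * a k) ^+ 2)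
  (fun s => ((-1) * a 0%N + \sum_(k < n) s k * a k.+1) ^+ 2));
  last by move=> s; rewrite sum_scons.
rewrite Ex_avg (Ex_ext _ _ (fun s => a 0%N ^+ 2 + (\sum_(k < n) s k * a k.+1) ^+ 2)).
  by rewrite ExD Ex_cst (IH (fun k => a k.+1)) big_ord_recl; congr (_ + _); apply: eq_bigr => i _; rewrite lift0.
move=> s; set L := \sum_(k < n) _; by field.
Qed.


Lemma sum_even_odd m (F : nat -> R) :
  \sum_(i < (2 * m).+1) F i = \sum_(j < m.+1) F (2 * j)%N + \sum_(j < m) F (2 * j).+1.
Proof.
elim: m => [|m IH]; first by rewrite muln0 !big_ord1 big_ord0 addr0.
have -> : (2 * m.+1).+1 = ((2 * m).+1).+1.+1 by lia.
rewrite big_ord_recr /= big_ord_recr /= IH.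
rewrite [X in _ = X + _]big_ord_recr [X in _ = _ + X]big_ord_recr /=.
have -> : (2 * m.+1 = (2 * m).+2)%N by lia.
ring.
Qed.

Lemma even_binom (x y : R) m :
  ((x + y) ^+ (2 * m) + (x - y) ^+ (2 * m)) / 2 =
  \sum_(j < m.+1) (('C(2 * m, 2 * j))%:R * y ^+ (2 * j)) * x ^+ (2 * (m-j)).
Proof.
rewrite !exprDn -big_split mulr_suml /=.
rewrite (sum_even_odd m (fun i => (x ^+ (2 * m - i) * y ^+ i *+ 'C(2 * m, i) +
   x ^+ (2 * m - i) * (- y) ^+ i *+ 'C(2 * m, i)) / 2)) /=.
rewrite [X in _ + X]big1 ?addr0; last first.
  move=> j _; rewrite exprNn -signr_odd oddS oddM /= expr1.
  rewrite mulN1r mulrN mulNrn; by rewrite subrr mul0r.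
apply: eq_bigr => j _.
rewrite exprNn -signr_odd oddM /= expr0 mul1r mulnBr.
by rewrite -mulr_natl; field.
Qed.

Definition D (m : nat) : R := ((2 * m)`!)%:R / ((m`!)%:R).

Lemma D_ge0 m : 0 <= D m.
Proof. by rewrite /D divr_ge0 ?ler0n. Qed.

Lemma D0 : D 0 = 1.
Proof. by rewrite /D muln0 divr1. Qed.

Lemma coefD m j : (j <= m)%N -> ('C(2 * m, 2 * j))%:R * D (m - j) <= ('C(m,j))%:R * D m.
Proof.
move=> hj; rewrite /D.
have hj2 : (2 * j <= 2 * m)%N by lia.
have e1 := bin_fact hj2.
have e2 := bin_fact hj.
have -> : (2 * (m-j) = 2 * m - 2 * j)%N by rewrite mulnBr.
have pB : (0 < (2 * j)`!)%N := fact_gt0 _.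
have pb : (0 < j`!)%N := fact_gt0 _.
have pc : (0 < (m-j)`!)%N := fact_gt0 _.
have pC : (0 < (2 * m-2 * j)`!)%N := fact_gt0 _.
have pC2 : (0 < 'C(m,j))%N by rewrite bin_gt0.
have hbB : (j`! <= (2 * j)`!)%N by apply: leq_fact; lia.
rewrite -e1 -e2 !natrM.
set C1 := ('C(2 * m,2 * j))%:R; set C2 := ('C(m,j))%:R.
set B := ((2 * j)`!)%:R; set b := (j`!)%:R; set c := ((m-j)`!)%:R; set Cc := ((2 * m-2 * j)`!)%:R.
have hB : 0 < B :> R by rewrite ltr0n.
have hb : 0 < b :> R by rewrite ltr0n.
have hc : 0 < c :> R by rewrite ltr0n.
have hC2 : 0 < C2 :> R by rewrite ltr0n.
have hbB' : b <= B :> R by rewrite ler_nat.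
have -> : C2 * (C1 * (B * Cc) / (C2 * (b * c))) = (C1 * (Cc / c)) * (B / b).
  field; apply/and3P; split; apply: lt0r_neq0 => //.
apply: ler_peMr.
  by rewrite mulr_ge0 ?divr_ge0 ?ler0n.
by rewrite ler_pdivlMr // mul1r.
Qed.

Lemma D_le m : D m <= ((2 * m) ^ m)%:R.
Proof.
rewrite /D ler_pdivrMr ?ltr0n ?fact_gt0 // -natrM ler_nat.
rewrite fact_prod (big_cat_nat _ (n := m.+1)) //=; last by lia.
rewrite -fact_prod [X in (X <= _)%N]mulnC leq_pmul2r ?fact_gt0 //.
have -> : ((2 * m) ^ m = \prod_(m.+1 <= i < (2 * m).+1) (2 * m))%N.
  by rewrite prod_nat_const_nat; have -> : ((2 * m).+1 - m.+1 = m)%N by lia.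
rewrite big_nat_cond [X in (_ <= X)%N]big_nat_cond.
apply: leq_prod => i /andP[/andP[_ hi] _] /=; lia.
Qed.


Lemma Ex_mom n m (a : nat -> R) :
  Ex n (fun s => (\sum_(k < n) s k * a k) ^+ (2 * m)) <= D m * (\sum_(k < n) a k ^+ 2) ^+ m.
Proof.
elim: n m a => [|n IH] m a.
  rewrite /= !big_ord0; case: m => [|m]; first by rewrite muln0 !expr0 D0 mulr1.
  have -> : (2 * m.+1 = (2 * m).+2)%N by lia.
  by rewrite !expr0n /= mulr0.
rewrite Ex_S (Ex_ext _ (fun s => (\sum_(k < n.+1) scons 1 s k * a k) ^+ (2 * m))
  (fun s => ((\sum_(k < n) s k * a k.+1) + a 0%N) ^+ (2 * m)));
  last by move=> s; rewrite sum_scons mul1r addrC.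
rewrite (Ex_ext _ (fun s => (\sum_(k < n.+1) scons (-1) s k * a k) ^+ (2 * m))
  (fun s => ((\sum_(k < n) s k * a k.+1) - a 0%N) ^+ (2 * m)));
  last by move=> s; rewrite sum_scons mulN1r addrC.
rewrite Ex_avg (Ex_ext _ _ (fun s => \sum_(j < m.+1) (('C(2 * m, 2 * j))%:R * a 0%N ^+ (2 * j)) *
   (\sum_(k < n) s k * a k.+1) ^+ (2 * (m - j)))); last by move=> s; rewrite even_binom.
rewrite Ex_sum.
set a' := \sum_(k < n) a k.+1 ^+ 2.
have ha' : 0 <= a' by apply: sumr_ge0 => i _; exact: sqr_ge0.
apply: (@le_trans _ _ (\sum_(j < m.+1) (('C(2 * m, 2 * j))%:R * a 0%N ^+ (2 * j)) *
   (D (m - j) * a' ^+ (m - j)))).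
  apply: ler_sum => j _; rewrite ExZ; apply: ler_wpM2l.
    by rewrite mulr_ge0 ?ler0n // exprM exprn_ge0 // sqr_ge0.
  exact: (IH (m - j)%N (fun k => a k.+1)).
rewrite [\sum_(k < n.+1) _]big_ord_recl.
have -> : \sum_(i < n) a (lift ord0 i) ^+ 2 = a' by apply: eq_bigr => i _; rewrite lift0.
rewrite addrC exprDn mulr_sumr; apply: ler_sum => j _.
have hj : (j <= m)%N by rewrite -ltnS ltn_ord.
set P := a 0%N ^+ (2 * j) * a' ^+ (m - j).
have hP : 0 <= P by rewrite /P; apply: mulr_ge0; [rewrite exprM exprn_ge0 // sqr_ge0 | exact: exprn_ge0].
have -> : ('C(2 * m, 2 * j))%:R * a 0%N ^+ (2 * j) * (D (m - j) * a' ^+ (m - j)) =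
   (('C(2 * m, 2 * j))%:R * D (m - j)) * P by rewrite /P; ring.
have -> : D m * (a' ^+ (m - j) * (a 0%N ^+ 2) ^+ j *+ 'C(m, j)) =
   (('C(m, j))%:R * D m) * P by rewrite /P -exprM -mulr_natl; ring.
by apply: ler_wpM2r => //; apply: coefD.
Qed.

Lemma cheb p (q z : 'I_p -> R) r : (forall h, 0 <= q h) -> (forall h, 0 <= z h) ->
  (\sum_h q h * z h ^+ r) * (\sum_h q h * z h) <= (\sum_h q h) * (\sum_h q h * z h ^+ r.+1).
Proof.
move=> hq hz.
rewrite -subr_ge0 !mulr_suml.
rewrite -sumrB.
have E : \sum_h ((q h * \sum_k q k * z k ^+ r.+1) - (q h * z h ^+ r * \sum_k q k * z k)) =
  \sum_h \sum_k (q h * q k * (z k ^+ r.+1 - z h ^+ r * z k)).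
  apply: eq_bigr => h _; rewrite !mulr_sumr -sumrB; apply: eq_bigr => k _; ring.
rewrite E.
have E2 : \sum_h \sum_k (q h * q k * (z k ^+ r.+1 - z h ^+ r * z k)) =
  \sum_h \sum_k (q k * q h * (z h ^+ r.+1 - z k ^+ r * z h)) by rewrite exchange_big.
suff hh : 0 <= (\sum_h \sum_k (q h * q k * (z k ^+ r.+1 - z h ^+ r * z k))) * 2 by
  rewrite pmulr_lge0 ?ltr0n in hh.
rewrite mulr_natr mulr2n [X in _ + X]E2 -big_split /=; apply: sumr_ge0 => h _.
rewrite -big_split /=; apply: sumr_ge0 => k _.
have -> : q h * q k * (z k ^+ r.+1 - z h ^+ r * z k) + q k * q h * (z h ^+ r.+1 - z k ^+ r * z h)
  = q h * q k * ((z k ^+ r - z h ^+ r) * (z k - z h)) by rewrite !exprS; ring.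
apply: mulr_ge0; first by rewrite mulr_ge0.
have mon : forall u v : R, 0 <= u -> u <= v -> u ^+ r <= v ^+ r.
  by move=> u v hu huv; apply: lerXn2r; rewrite ?nnegrE // (le_trans hu huv).
have [hkh|hhk] := lerP (z h) (z k).
  by apply: mulr_ge0; rewrite subr_ge0 //; apply: mon.
rewrite -mulrNN !opprB; apply: mulr_ge0; rewrite subr_ge0 //; last exact: ltW.
by apply: mon => //; exact: ltW.
Qed.

Lemma jensen p (q z : 'I_p -> R) r : (forall h, 0 <= q h) -> (forall h, 0 <= z h) ->
  (\sum_h q h * z h) ^+ r.+1 <= (\sum_h q h) ^+ r * \sum_h q h * z h ^+ r.+1.
Proof.
move=> hq hz; elim: r => [|r IH]; first by rewrite expr0 mul1r expr1; exact: lexx.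
rewrite exprS mulrC.
apply: (@le_trans _ _ ((\sum_h q h) ^+ r * (\sum_h q h * z h ^+ r.+1) * (\sum_h q h * z h))).
  apply: ler_wpM2r; last exact: IH.
  by apply: sumr_ge0 => h _; rewrite mulr_ge0.
rewrite -mulrA exprS (mulrC (\sum_h q h)) -mulrA.
apply: ler_wpM2l; first by apply: exprn_ge0; apply: sumr_ge0.
exact: cheb.
Qed.


Lemma Ex_Ymom n p m (a : 'I_p -> nat -> R) :
  Ex n (fun s => (\sum_h (\sum_(k < n) s k * a h k) ^+ 2) ^+ m) <=
  D m * (\sum_h \sum_(k < n) a h k ^+ 2) ^+ m.
Proof.
case: m => [|m].
  rewrite (Ex_ext _ _ (fun _ => 1)); last by move=> s; rewrite expr0.
  by rewrite Ex_cst D0 !expr0 mul1r.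
pose q h := \sum_(k < n) a h k ^+ 2.
have hq : forall h, 0 <= q h by move=> h; apply: sumr_ge0 => k _; exact: sqr_ge0.
have hL0 : forall h (s : nat -> R), q h = 0 -> \sum_(k < n) s k * a h k = 0.
  move=> h s hq0; apply: big1 => k _.
  have := @psumr_eq0P _ _ _ (fun k : 'I_n => a h k ^+ 2) (fun k _ => sqr_ge0 _) hq0 k isT.
  by move/eqP; rewrite sqrf_eq0 => /eqP ->; rewrite mulr0.
pose z h (s : nat -> R) := if q h == 0 then 0 else (\sum_(k < n) s k * a h k) ^+ 2 / q h.
have hz : forall h s, 0 <= z h s.
  move=> h s; rewrite /z; case: ifP => // _; apply: divr_ge0 => //; exact: sqr_ge0.
have E : forall s : nat -> R, \sum_h (\sum_(k < n) s k * a h k) ^+ 2 = \sum_h q h * z h s.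
  move=> s; apply: eq_bigr => h _; rewrite /z; case: ifPn => [/eqP h0|h0].
    by rewrite hL0 // h0 expr0n mul0r.
  by field.
apply: (@le_trans _ _ (Ex n (fun s => (\sum_h q h) ^+ m * \sum_h q h * z h s ^+ m.+1))).
  apply: Ex_le => s; rewrite E; apply: jensen => // h; exact: hz.
rewrite ExZ Ex_sum.
have hb : forall h : 'I_p, Ex n (fun s => q h * z h s ^+ m.+1) <= D m.+1 * q h.
  move=> h; rewrite ExZ mulrC; apply: ler_wpM2r => //.
  have [h0|h0] := eqVneq (q h) 0.
    rewrite (Ex_ext _ _ (fun _ => 0)) ?Ex_cst ?D_ge0 // => s.
    by rewrite /z h0 eqxx expr0n.
  have hqp : 0 < q h by rewrite lt0r h0 hq.
  rewrite (Ex_ext _ _ (fun s => (\sum_(k < n) s k * a h k) ^+ (2 * m.+1) * (q h ^+ m.+1)^-1)); last first.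
    by move=> s; rewrite /z (negbTE h0) exprMn exprVn -exprM.
  rewrite (Ex_ext _ _ (fun s => (q h ^+ m.+1)^-1 * (\sum_(k < n) s k * a h k) ^+ (2 * m.+1))); last first.
    by move=> s; rewrite mulrC.
  rewrite ExZ mulrC ler_pdivrMr ?exprn_gt0 //.
  exact: Ex_mom.
apply: (@le_trans _ _ ((\sum_h q h) ^+ m * \sum_h D m.+1 * q h)).
  apply: ler_wpM2l; first by apply: exprn_ge0; apply: sumr_ge0.
  by apply: ler_sum => h _; exact: hb.
by rewrite -mulr_sumr mulrCA -exprSr.
Qed.


Section Psd.
Variable N : nat.
Implicit Types (A : 'M[R]_N) (x y : 'I_N -> R).

Definition bform A x y := \sum_j \sum_l x j * A j l * y l.
Definition psd' A := (forall j l, A j l = A l j) /\ (forall x, 0 <= bform A x x).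

Lemma bform_sym A x y : (forall j l, A j l = A l j) -> bform A x y = bform A y x.
Proof.
move=> hA; rewrite /bform exchange_big; apply: eq_bigr => j _; apply: eq_bigr => l _.
rewrite hA; ring.
Qed.

Lemma bform_expand A x y t :
  bform A (fun j => x j + t * y j) (fun j => x j + t * y j) =
  bform A x x + t * bform A x y + t * bform A y x + t ^+ 2 * bform A y y.
Proof.
rewrite /bform !mulr_sumr -!big_split /=; apply: eq_bigr => j _.
rewrite !mulr_sumr -!big_split /=; apply: eq_bigr => l _; ring.
Qed.

Lemma psd_CS A x y : psd' A -> bform A x y ^+ 2 <= bform A x x * bform A y y.
Proof.
case=> hs hp.
have key : forall t, 0 <= bform A x x + 2 * t * bform A x y + t ^+ 2 * bform A y y.
  move=> t; have := hp (fun j => x j + t * y j).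
  rewrite bform_expand (bform_sym A y x hs).
  suff -> : bform A x x + t * bform A x y + t * bform A x y + t ^+ 2 * bform A y y =
    bform A x x + 2 * t * bform A x y + t ^+ 2 * bform A y y by [].
  ring.
move: key; set a := bform A x x; set b := bform A x y; set c := bform A y y => key.
have hc : 0 <= c := hp y.
have ha : 0 <= a := hp x.
have [hc0|hc0] := eqVneq c 0.
  have [hb0|hb0] := eqVneq b 0; first by rewrite hb0 expr0n /= mulr_ge0.
  exfalso; have := key (- (a + 1) / (2 * b)); rewrite hc0 mulr0 addr0.
  have -> : a + 2 * (- (a + 1) / (2 * b)) * b = -1 by field.
  by rewrite ler0N1.
have hcp : 0 < c by rewrite lt0r hc0 hc.
have := key (- b / c).
have -> : a + 2 * (- b / c) * b + (- b / c) ^+ 2 * c = a - b ^+ 2 / c by field.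
by rewrite subr_ge0 ler_pdivrMr.
Qed.

Lemma sum_delta (f : 'I_N -> R) i : \sum_j (j == i)%:R * f j = f i.
Proof.
rewrite (bigD1 i) //= eqxx mul1r big1 ?addr0 // => j /negbTE ->; by rewrite mul0r.
Qed.

Lemma sum_delta' (f : 'I_N -> R) i : \sum_j f j * (j == i)%:R = f i.
Proof. rewrite -[RHS](sum_delta f i); apply: eq_bigr => j _; exact: mulrC. Qed.

Definition ev i : 'I_N -> R := fun k => (k == i)%:R.

Lemma bform_ev A x i : bform A x (ev i) = \sum_j x j * A j i.
Proof. by apply: eq_bigr => j _; rewrite (sum_delta' (fun l => x j * A j l)). Qed.

Lemma bform_evev A i l : bform A (ev i) (ev l) = A i l.
Proof. by rewrite bform_ev sum_delta. Qed.

Lemma psd_diag A i : psd' A -> 0 <= A i i.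
Proof. by case=> _ hp; rewrite -bform_evev. Qed.

Lemma psd_offdiag A i j : psd' A -> A i i = 0 -> A i j = 0.
Proof.
move=> hA h0; have := psd_CS A (ev i) (ev j) hA.
rewrite !bform_evev h0 mul0r => h.
apply/eqP; rewrite -sqrf_eq0 eq_le h sqr_ge0 //.
Qed.

Lemma psd_decomp A : psd' A ->
  exists g : nat -> 'I_N -> R, forall j l, A j l = \sum_(k < N) g k j * g k l.
Proof.
suff H : forall d A, psd' A -> (#|[set i | A i i != 0%R]| <= d)%N ->
   exists g : nat -> 'I_N -> R, forall j l, A j l = \sum_(k < d) g k j * g k l.
  move=> hA; apply: H hA _; rewrite -[X in (_ <= X)%N](card_ord N); exact: max_card.
elim=> [|d IH] {}A hA hd.
  exists (fun _ _ => 0) => j l; rewrite big_ord0.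
  have h0 : forall i, A i i = 0.
    move=> i; apply/eqP; apply: contraTT hd => h; rewrite -ltnNge card_gt0.
    by apply/set0Pn; exists i; rewrite inE.
  exact: psd_offdiag A j l hA (h0 j).
case: (leqP #|[set i | A i i != 0%R]| d) => hd'.
  have [g hg] := IH A hA hd'.
  exists (fun k j => if (k < d)%N then g k j else 0) => j l.
  rewrite big_ord_recr /= ltnn mul0r addr0 hg; apply: eq_bigr => k _; by rewrite ltn_ord.
have : (0 < #|[set i | A i i != 0%R]|)%N by lia.
rewrite card_gt0 => /set0Pn [i]; rewrite inE => hi.
have hpos : 0 < A i i by rewrite lt0r hi psd_diag.
pose gn j := A j i / Num.sqrt (A i i).
pose A' := \matrix_(j, l) (A j l - gn j * gn l).
have hgg : forall j l, gn j * gn l = A j i * A l i / A i i.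
  move=> j l; rewrite /gn mulf_div -expr2 sqr_sqrtr //; exact: ltW.
have hsym := hA.1.
have hA' : psd' A'.
  split.
    by move=> j l; rewrite !mxE !hgg hsym (mulrC (A l i)).
  move=> x.
  have E : bform A' x x = bform A x x - (\sum_j x j * A j i) ^+ 2 / A i i.
    have S : (\sum_j x j * A j i) ^+ 2 / A i i =
        \sum_j \sum_l x j * (A j i * A l i / A i i) * x l.
      rewrite expr2 mulr_suml mulr_suml; apply: eq_bigr => j _.
      rewrite mulr_sumr mulr_suml; apply: eq_bigr => l _; rewrite (hsym l i); field.
      by rewrite lt0r_neq0.
    rewrite S /bform -sumrB; apply: eq_bigr => j _; rewrite -sumrB; apply: eq_bigr => l _.
    rewrite mxE hgg; ring.
  rewrite E subr_ge0 ler_pdivrMr //.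
  have := psd_CS A x (ev i) hA; by rewrite bform_ev bform_evev.
have hcard : (#|[set k | A' k k != 0%R]| <= d)%N.
  have sub : [set k | A' k k != 0] \subset [set k | A k k != 0] :\ i.
    apply/fintype.subsetP => k; rewrite !inE mxE hgg => hk.
    apply/andP; split.
      apply: contraNneq hk => ->; apply/eqP; field; by rewrite lt0r_neq0.
    apply: contraNneq hk => hk0.
    by rewrite hk0 (psd_offdiag A k i hA hk0) !mul0r subr0.
  have := subset_leq_card sub.
  have := cardsD1 i [set k | A k k != 0]; rewrite inE hi /=.
  move: hd hd'; set c1 := #|[set k | A k k != 0]|; set c2 := #|_ :\ i|; set c3 := #|[set k | A' k k != 0]|; lia.
have [g hg] := IH A' hA' hcard.
exists (fun k j => if (k < d)%N then g k j else gn j) => j l.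
rewrite big_ord_recr /= ltnn.
have -> : \sum_(k < d) (if (k < d)%N then g k j else gn j) * (if (k < d)%N then g k l else gn l)
  = \sum_(k < d) g k j * g k l by apply: eq_bigr => k _; rewrite ltn_ord.
rewrite -hg mxE; ring.
Qed.

Lemma bform_decomp A (g : nat -> 'I_N -> R) :
  (forall j l, A j l = \sum_(k < N) g k j * g k l) ->
  forall x, bform A x x = \sum_(h < N) (\sum_j g h j * x j) ^+ 2.
Proof.
move=> hg x.
transitivity (\sum_(h < N) \sum_j \sum_l (g h j * x j) * (g h l * x l)); last first.
  apply: eq_bigr => h _; rewrite expr2 mulr_suml; apply: eq_bigr => j _.
  by rewrite mulr_sumr.
rewrite /bform.
have E : forall j l, x j * A j l * x l = \sum_(h < N) (g h j * x j) * (g h l * x l).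
  move=> j l; rewrite hg mulr_sumr mulr_suml; apply: eq_bigr => h _; ring.
under eq_bigr => j _ do under eq_bigr => l _ do rewrite E.
under eq_bigr => j _ do rewrite exchange_big.
by rewrite exchange_big.
Qed.

End Psd.
Arguments bform {N} A x y.
Arguments psd' {N} A.
Arguments psd_decomp {N A}.
Arguments bform_decomp {N A g}.

Lemma eqle (x y : R) : x = y -> x <= y. Proof. by move->. Qed.

Lemma psd_psd' N (A : 'M[R]_N) : psd A -> psd' A.
Proof.
case=> hT hp; split.
  by move=> j l; have := congr1 (fun B : 'M[R]_N => B l j) hT; rewrite mxE.
move=> x; have := hp (\col_j x j).
have -> : ((\col_j x j)^T *m A *m (\col_j x j)) ord0 ord0 = bform A x x.
  rewrite /bform mxE.
  under eq_bigr => l _ do rewrite mxE mulr_suml.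
  rewrite exchange_big; apply: eq_bigr => j _; apply: eq_bigr => l _.
  by rewrite !mxE.
by [].
Qed.

Lemma qform_bform N (A : 'M[R]_N) w :
  qform A w = bform A (fun j => w j ord0) (fun j => w j ord0).
Proof.
rewrite /qform /bform mxE.
under eq_bigr => l _ do rewrite mxE mulr_suml.
rewrite exchange_big; apply: eq_bigr => j _; apply: eq_bigr => l _.
by rewrite !mxE.
Qed.

Lemma qformZ N (A : 'M[R]_N) a w : qform A (a *: w) = a ^+ 2 * qform A w.
Proof.
rewrite !qform_bform /bform mulr_sumr; apply: eq_bigr => j _.
rewrite mulr_sumr; apply: eq_bigr => l _; rewrite !mxE; ring.
Qed.

Lemma sqnormZ N a (w : 'cV[R]_N) : sqnorm (a *: w) = a ^+ 2 * sqnorm w.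
Proof. rewrite /sqnorm mulr_sumr; apply: eq_bigr => j _; rewrite !mxE; ring. Qed.

Lemma qform0 N (A : 'M[R]_N) : qform A 0 = 0.
Proof.
rewrite qform_bform /bform big1 // => j _; rewrite big1 // => l _; rewrite !mxE; ring.
Qed.

Lemma sqnorm0 N : sqnorm (0 : 'cV[R]_N) = 0.
Proof. rewrite /sqnorm big1 // => j _; rewrite !mxE; ring. Qed.

Lemma D2 : D 2 = 12.
Proof. by rewrite /D (_ : ((2 * 2)`! = 12 * 2`!)%N) // natrM mulfK // pnatr_eq0. Qed.

Lemma key M N (X : 'M[R]_N) (H : 'I_M -> 'M[R]_N) (m : nat) :
  psd' X -> (forall i, psd' (H i)) -> (0 < m)%N ->
  (128 * #|[set i | (0 < \tr (H i *m X))%R]| <= 2 ^ m)%N ->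
  exists w : 'cV[R]_N, (forall i, qform (H i) w <= (4 * m)%:R * \tr (H i *m X)) /\
     \tr X / 2 <= sqnorm w.
Proof.
move=> hX hH hm hk.
have [v hv] := psd_decomp hX.
have [G hG] := choice (fun i => psd_decomp (hH i)).
pose w (s : nat -> R) : 'cV[R]_N := \col_j \sum_(k < N) s k * v k j.
pose a i (h : 'I_N) k := \sum_j G i h j * v k j.
have F1 : forall s, sqnorm (w s) = \sum_(j : 'I_N) (\sum_(k < N) s k * v k j) ^+ 2.
  by move=> s; rewrite /sqnorm; apply: eq_bigr => j _; rewrite mxE.
have F2 : \tr X = \sum_(j : 'I_N) \sum_(k < N) v k j ^+ 2.
  by rewrite /mxtrace; apply: eq_bigr => j _; rewrite hv; apply: eq_bigr => k _; rewrite expr2.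
have F3 : forall i s, qform (H i) (w s) = \sum_(h : 'I_N) (\sum_(k < N) s k * a i h k) ^+ 2.
  move=> i s; rewrite qform_bform (bform_decomp (hG i)); apply: eq_bigr => h _.
  congr (_ ^+ 2).
  under eq_bigr => j _ do rewrite mxE mulr_sumr.
  rewrite exchange_big; apply: eq_bigr => k _; rewrite mulr_sumr; apply: eq_bigr => j _; ring.
have F4 : forall i, \tr (H i *m X) = \sum_(h : 'I_N) \sum_(k < N) a i h k ^+ 2.
  move=> i; rewrite /mxtrace.
  under eq_bigr => j _ do rewrite mxE.
  have E : forall j l, H i j l * X l j = \sum_(k < N) v k j * H i j l * v k l.
    by move=> j l; rewrite hv mulr_sumr; apply: eq_bigr => k _; ring.
  under eq_bigr => j _ do under eq_bigr => l _ do rewrite E.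
  under eq_bigr => j _ do rewrite exchange_big.
  rewrite exchange_big /=.
  transitivity (\sum_(k < N) bform (H i) (v k) (v k)); first by [].
  rewrite [RHS]exchange_big; apply: eq_bigr => k _.
  by rewrite (bform_decomp (hG i)).
have hs0 : forall i, 0 <= \tr (H i *m X).
  by move=> i; rewrite F4; apply: sumr_ge0 => h _; apply: sumr_ge0 => k _; exact: sqr_ge0.
have hT0 : 0 <= \tr X.
  by rewrite F2; apply: sumr_ge0 => h _; apply: sumr_ge0 => k _; exact: sqr_ge0.
have [T0|Tpos] := eqVneq (\tr X) 0.
  exists 0; split; last by rewrite T0 mul0r sqnorm0.
  by move=> i; rewrite qform0 mulr_ge0.
have hTp : 0 < \tr X by rewrite lt0r Tpos hT0.
set T := \tr X in F2 hT0 Tpos hTp *.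
pose t : R := (4 * m)%:R.
have htp : 0 < t by rewrite ltr0n; lia.
pose Bset := [set i | (0 < \tr (H i *m X))%R].
pose Y i (s : nat -> R) := \sum_(h : 'I_N) (\sum_(k < N) s k * a i h k) ^+ 2.
pose nr (s : nat -> R) := \sum_(j : 'I_N) (\sum_(k < N) s k * v k j) ^+ 2.
pose Bf (s : nat -> R) := \sum_(i in Bset) (Y i s / (t * \tr (H i *m X))) ^+ m.
pose Phi s := nr s - nr s ^+ 2 / (96 * T) - 24 * T * Bf s.
have hY0 : forall i s, 0 <= Y i s by move=> i s; apply: sumr_ge0 => h _; exact: sqr_ge0.
have hBf0 : forall s, 0 <= Bf s.
  move=> s; apply: sumr_ge0 => i hi; apply: exprn_ge0; apply: divr_ge0; first exact: hY0.
  exact: mulr_ge0 (ltW htp) (hs0 i).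
have EnR : Ex N nr = T.
  rewrite /nr Ex_sum F2; apply: eq_bigr => j _; exact: (Ex_sq N (fun k => v k j)).
have En2 : Ex N (fun s => nr s ^+ 2) <= 12 * T ^+ 2.
  have h := Ex_Ymom N N 2 (fun (j : 'I_N) k => v k j).
  simpl in h; rewrite D2 -F2 in h; exact: h.
have EB : Ex N Bf <= 128^-1.
  rewrite Ex_sum.
  apply: (@le_trans _ _ (\sum_(i in Bset) (D m / t ^+ m))).
    apply: ler_sum => i; rewrite inE => hi.
    rewrite (Ex_ext _ _ (fun s => ((t * \tr (H i *m X)) ^+ m)^-1 * Y i s ^+ m)); last first.
      by move=> s; rewrite exprMn exprVn mulrC.
    rewrite ExZ.
    have h := Ex_Ymom N N m (a i); rewrite -F4 in h.
    apply: le_trans (ler_wpM2l _ h) _; first by rewrite invr_ge0 exprn_ge0 // (mulr_ge0 (ltW htp) (hs0 i)).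
    have hs1 : \tr (H i *m X) ^+ m != 0 by rewrite expf_neq0 // lt0r_neq0.
    have ht1 : t ^+ m != 0 by rewrite expf_neq0 // lt0r_neq0.
    suff -> : ((t * \tr (H i *m X)) ^+ m)^-1 * (D m * \tr (H i *m X) ^+ m) = D m / t ^+ m by [].
    rewrite exprMn; move: hs1 ht1; set u := \tr _ ^+ m; set tt := t ^+ m => hs1 ht1.
    by field; rewrite hs1 ht1.
  rewrite sumr_const.
  have hD : D m / t ^+ m <= (2 ^ m)%:R^-1.
    have -> : t ^+ m = (2 ^ m)%:R * ((2 * m) ^ m)%:R.
      by rewrite /t -natrX -natrM -expnMn; congr (_ ^ _)%:R; lia.
    rewrite ler_pdivrMr; last by rewrite mulr_gt0 // ltr0n expn_gt0 //; lia.
    rewrite mulKf ?pnatr_eq0 ?expn_eq0 //; exact: D_le.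
  apply: le_trans (ler_wMn2r _ hD) _.
  have hk' : 128 * (#|Bset|)%:R <= (2 ^ m)%:R :> R by rewrite -natrM ler_nat.
  have hP : 0 < (2 ^ m)%:R :> R by rewrite ltr0n expn_gt0.
  have -> : (2 ^ m)%:R^-1 *+ #|Bset| = (#|Bset|)%:R / (2 ^ m)%:R :> R by rewrite [RHS]mulr_natl.
  rewrite ler_pdivrMr //.
  move: hk'; set P := (2 ^ m)%:R; set kk := (#|Bset|)%:R => hk'.
  lra.
have EPhi : T / 2 <= Ex N Phi.
  have E : Ex N Phi = Ex N nr - (96 * T)^-1 * Ex N (fun s => nr s ^+ 2) - 24 * T * Ex N Bf.
    rewrite /Phi (Ex_ext _ _ (fun s => nr s + ((- (96 * T)^-1) * nr s ^+ 2 + (- (24 * T)) * Bf s)));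
      last by move=> s; ring.
    rewrite !ExD !ExZ; ring.
  rewrite E EnR.
  have h1 : (96 * T)^-1 * Ex N (fun s => nr s ^+ 2) <= T / 8.
    apply: le_trans (ler_wpM2l _ En2) _; first by rewrite invr_ge0 mulr_ge0.
    suff -> : (96 * T)^-1 * (12 * T ^+ 2) = T / 8 by [].
    by field; rewrite ?Tpos.
  have h2 : 24 * T * Ex N Bf <= 24 * T / 128.
    by apply: ler_wpM2l => //; rewrite mulr_ge0.
  move: h1 h2; set e1 := (96 * T)^-1 * _; set e2 := 24 * T * _ => h1 h2.
  lra.
have [s0 hs0'] := Ex_exists N Phi.
have hPhi : T / 2 <= Phi s0 := le_trans EPhi hs0'.
have good : forall i, i \in Bset -> Y i s0 <= t * \tr (H i *m X).
  move=> i hi; rewrite leNgt; apply/negP => hlt.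
  have hsp : 0 < \tr (H i *m X) by move: hi; rewrite inE.
  have hB1 : 1 <= Bf s0.
    rewrite /Bf (bigD1 i) //=.
    apply: le_trans (_ : (Y i s0 / (t * \tr (H i *m X))) ^+ m <= _).
      by apply: exprn_ege1; rewrite ler_pdivlMr ?mulr_gt0 // mul1r ltW.
    rewrite lerDl; apply: sumr_ge0 => j _; apply: exprn_ge0; apply: divr_ge0; first exact: hY0.
    exact: mulr_ge0 (ltW htp) (hs0 j).
  have hq : nr s0 - nr s0 ^+ 2 / (96 * T) - 24 * T =
      - ((nr s0 - 48 * T) ^+ 2 / (96 * T)) by field; rewrite ?Tpos.
  have hq0 : 0 <= (nr s0 - 48 * T) ^+ 2 / (96 * T).
    by apply: divr_ge0; [exact: sqr_ge0 | rewrite mulr_ge0].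
  have hB : 24 * T <= 24 * T * Bf s0 by apply: ler_peMr => //; rewrite mulr_ge0.
  move: hPhi hq hq0 hB; rewrite /Phi.
  set u := nr s0; set u2 := u ^+ 2 / (96 * T); set z := (u - 48 * T) ^+ 2 / (96 * T).
  set bb := 24 * T * Bf s0 => hPhi hq hq0 hB.
  lra.
have hn : T / 2 <= nr s0.
  have : 0 <= nr s0 ^+ 2 / (96 * T) by apply: divr_ge0; [exact: sqr_ge0 | rewrite mulr_ge0].
  have : 0 <= 24 * T * Bf s0 by rewrite !mulr_ge0.
  move: hPhi; rewrite /Phi; set u2 := nr s0 ^+ 2 / _; set bb := 24 * T * _.
  lra.
exists (w s0); split; last by rewrite F1.
move=> i; rewrite F3 -/(Y i s0).
case: (boolP (i \in Bset)) => hi; first exact: good.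
have hs : \tr (H i *m X) = 0.
  apply/eqP; rewrite eq_le hs0 andbT; move: hi; rewrite inE -leNgt; exact.
have ha0 : forall (h k : 'I_N), a i h k = 0.
  move=> h k; move: hs; rewrite F4 => hs.
  have := @psumr_eq0P _ _ _ (fun h : 'I_N => \sum_(k < N) a i h k ^+ 2)
    (fun h _ => sumr_ge0 _ (fun k _ => sqr_ge0 _)) hs h isT.
  move=> hh.
  have := @psumr_eq0P _ _ _ (fun k : 'I_N => a i h k ^+ 2) (fun k _ => sqr_ge0 _) hh k isT.
  by move/eqP; rewrite sqrf_eq0 => /eqP.
rewrite hs mulr0 /Y big1 // => h _; rewrite big1 ?expr0n // => k _; by rewrite ha0 mulr0.
Qed.



Lemma rounding M Q (b : 'I_M -> R) : (2 <= M)%N -> (1 <= Q)%N -> (Q <= M - 1)%N ->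
  (forall i, 0 <= b i <= 1) -> \sum_i b i = Q%:R ->
  exists B : {set 'I_M}, #|B| = Q /\ forall i, i \in B -> ((M - Q + 1)%:R)^-1 <= b i.
Proof.
move=> hM hQ1 hQ2 hb hsum.
set th := ((M - Q + 1)%:R)^-1 : R.
have hMQ : ((M - Q + 1)%:R : R) = M%:R - Q%:R + 1 by rewrite natrD natrB ?natr1 //; lia.
have hth0 : 0 < th by rewrite invr_gt0 ltr0n; lia.
have hth1 : th * (M%:R - Q%:R + 1) = 1 by rewrite -hMQ mulVf // pnatr_eq0; lia.
set A := [set i | th <= b i].
have hA : (Q <= #|A|)%N.
  rewrite leqNgt; apply/negP => hlt.
  have hne : has (fun i => i \notin A) (index_enum 'I_M).
    apply/hasP.
    have : (0 < #|~: A|)%N by have := cardsC A; rewrite card_ord; lia.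
    by rewrite card_gt0 => /set0Pn [i]; rewrite inE => hi; exists i; rewrite ?mem_index_enum.
  have h1 : \sum_(i | i \in A) b i <= (#|A|)%:R.
    apply: (@le_trans _ _ (\sum_(i | i \in A) 1)); first by apply: ler_sum => i _; case/andP: (hb i).
    by rewrite sumr_const.
  have h2 : \sum_(i | i \notin A) b i < th * (#|~: A|)%:R.
    apply: (@lt_le_trans _ _ (\sum_(i | i \notin A) th)).
      apply: ltr_sum => // i; rewrite inE; by rewrite -ltNge.
    rewrite sumr_const; apply: eqle.
    have -> : #|(fun i : 'I_M => i \notin A)| = #|~: A| by apply: eq_card => i; rewrite inE.
    by rewrite mulr_natr.
  have hC : (#|~: A|)%:R = M%:R - (#|A|)%:R :> R.
    have hc := cardsC A; rewrite card_ord in hc.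
    have -> : (#|~: A| = M - #|A|)%N by lia.
    by rewrite natrB //; lia.
  have hsplit := hsum; rewrite (bigID (fun i => i \in A)) /= in hsplit.
  have ha : (#|A|)%:R + 1 <= Q%:R :> R by rewrite natr1 ler_nat.
  move: h1 h2 hC hsplit ha hth1 hth0.
  set a := (#|A|)%:R; set c := (#|~: A|)%:R; set s1 := \sum_(i | _) _; set s2 := \sum_(i | _) _.
  move=> h1 h2 hC hsplit ha hth1 hth0.
  have hth1' : th <= 1.
    have hQM : (Q%:R : R) + 1 <= M%:R by rewrite natr1 ler_nat; lia.
    have hge1 : 1 <= M%:R - Q%:R + 1 :> R by lra.
    rewrite -[X in _ <= X]hth1 ler_peMr //; exact: ltW.
  rewrite hC in h2.
  nra.
exists [set x in take Q (enum A)]; split.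
  rewrite cardsE.
  have /card_uniqP -> : uniq (take Q (enum A)) by rewrite take_uniq // enum_uniq.
  by rewrite size_takel // -cardE.
move=> i; rewrite inE => /mem_take; rewrite mem_enum inE; exact.
Qed.


Lemma K_ge M N (H : 'I_M -> 'M[R]_N) (S : {set 'I_M}) :
  (forall i, i \in S -> H i != 0) -> (#|S|)%:R <= K_of H.
Proof.
move=> hS; rewrite /K_of.
apply: (@le_trans _ _ (\sum_(i : 'I_M) (if i \in S then 1 else 0))).
  by rewrite -big_mkcond sumr_const.
apply: ler_sum => i _.
have hsq : 0 <= Num.sqrt (2 * M%:R) :> R by exact: sqrtr_ge0.
case: ifP => hi.
  rewrite le_min; apply/andP; split.
    rewrite ler1n lt0n mxrank_eq0; exact: hS.
  rewrite -[X in X <= _]sqrtr1 ler_wsqrtr //.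
  have : (0 < M)%N by apply: leq_ltn_trans (ltn_ord i).
  rewrite -(ler1n R) => hM; lra.
by rewrite le_min ler0n sqrtr_ge0.
Qed.

Lemma K_zero M N (H : 'I_M -> 'M[R]_N) : (forall i, H i = 0) -> K_of H = 0.
Proof.
move=> h0; rewrite /K_of big1 // => i _.
have -> : \rank (H i) = 0%N by apply/eqP; rewrite mxrank_eq0 h0.
by rewrite min_l ?sqrtr_ge0.
Qed.

Lemma ln_lb (x : R) : 0 < x -> 1 - x^-1 <= ln x.
Proof.
move=> hx; have := expR_ge1Dx (- ln x).
rewrite expRN lnK ?posrE // => h; lra.
Qed.

Lemma const_bound (K : R) (k : nat) : 0 <= K -> k%:R <= K -> (K != 0 -> 1 <= K) ->
  1 / (200 * ln (50 * K)) <= ((8 * (8 + trunc_log 2 k))%:R)^-1.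
Proof.
move=> hK0 hkK hK1.
have [->|Kn0] := eqVneq K 0.
  by rewrite mulr0 ln0 // mulr0 invr0 mulr0 invr_ge0 ler0n.
have hK : 1 <= K := hK1 Kn0.
set j := trunc_log 2 k.
have h2j : (2 ^ j)%:R <= K.
  have [k0|kpos] := posnP k.
    by rewrite /j k0 (_ : trunc_log 2 0 = 0%N).

  apply: le_trans hkK; rewrite ler_nat; exact: trunc_logP.
have hKp : 0 < K by lra.
have l50 : 1 - 50^-1 <= ln (50 : R) by apply: ln_lb.
have l2 : 1 - 2^-1 <= ln (2 : R) by apply: ln_lb.
have hlnK : ln 2 *+ j <= ln K.
  rewrite -lnXn // -natrX ler_ln // posrE ?ltr0n ?expn_gt0 //.
have hln : ln (50 * K) = ln 50 + ln K by rewrite lnM // posrE ltr0n.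
have hjr : ln (2 : R) *+ j = (j%:R) * ln (2 : R) by rewrite mulr_natl.
rewrite hjr in hlnK.
have hL : (8 * (8 + j))%:R <= 200 * ln (50 * K).
  rewrite hln natrM natrD.
  have : 0 <= j%:R :> R by exact: ler0n.
  have h50 : (50 : R)^-1 = 1/50 by rewrite div1r.
  have h2 : (2 : R)^-1 = 1/2 by rewrite div1r.
  move: l50 l2 hlnK; rewrite h50 h2.
  set L2 := ln 2; set L50 := ln 50; set LK := ln K; set J := j%:R.
  move=> l50 l2 hlnK hJ; nra.
rewrite div1r lef_pV2 // posrE.
  apply: lt_le_trans hL; rewrite ltr0n; lia.
rewrite ltr0n; lia.
Qed.


Lemma sup_scale (A B : set \bar R) (c : R) : 0 < c ->
  (forall x, A x -> exists2 y, B y & (c%:E * x <= y)%E) ->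
  (c%:E * ereal_sup A <= ereal_sup B)%E.
Proof.
move=> hc hAB.
have h1 : (ereal_sup A <= c^-1%:E * ereal_sup B)%E.
  apply: ge_ereal_sup => x hx.
  have [y hy hxy] := hAB x hx.
  have hy' : (c%:E * x <= ereal_sup B)%E.
    by apply: le_trans hxy _; apply: ereal_sup_ge; exists y.
  rewrite -(@lee_pmul2l _ c%:E) ?lte_fin // muleA -EFinM mulfV ?mul1e //.
  exact: lt0r_neq0.
apply: (@le_trans _ _ (c%:E * (c^-1%:E * ereal_sup B))%E).
  by rewrite lee_pmul2l // lte_fin.
by rewrite muleA -EFinM mulfV ?mul1e // lt0r_neq0.
Qed.

Lemma hk_aux k : (128 * k <= 2 ^ (8 + trunc_log 2 k))%N.
Proof.
have := trunc_log_ltn k (isT : (1 < 2)%N); rewrite expnD expnS.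
set j := trunc_log 2 k; rewrite (_ : (2 ^ 8 = 256)%N) //; lia.
Qed.

Lemma main_thm (N M Q : nat) (eps : R)
  (H : 'I_M -> 'M[R]_N)
  (hN : (2 <= N)%N) (hM : (2 <= M)%N) (hQ1 : (1 <= Q)%N) (hQ2 : (Q <= M - 1)%N)
  (heps0 : 0 < eps) (heps1 : eps < 1)
  (hH : forall i, psd (H i)) :
  (((eps / ctilde M Q eps) * (1 / (200 * ln (50 * K_of H))))%:E
     * v_SDP Q eps H <= v_QP Q eps H)%E.
Proof.
set K := K_of H.
set ct := ctilde M Q eps.
set c := eps / ct * (1 / (200 * ln (50 * K))).
set th := ((M - Q + 1)%:R)^-1 : R.
have hMQ : ((M - Q + 1)%:R : R) = M%:R - Q%:R + 1 by rewrite natrD natrB ?natr1 //; lia.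
have hQM : (Q%:R : R) + 1 <= M%:R by rewrite natr1 ler_nat; lia.
have hth0 : 0 < th by rewrite invr_gt0 ltr0n; lia.
have hth1 : th * (M%:R - Q%:R + 1) = 1 by rewrite -hMQ mulVf // pnatr_eq0; lia.
have hth1' : th <= 1.
  have hge1 : 1 <= M%:R - Q%:R + 1 :> R by lra.
  rewrite -[X in _ <= X]hth1 ler_peMr //; exact: ltW.
have hct : ct = 1 - (1 - eps) * th by rewrite /ct /ctilde mulrC.
have hepsct : eps <= ct.
  have e1 : 0 <= 1 - eps by lra.
  have e2 : 0 <= 1 - th by lra.
  have := mulr_ge0 e1 e2; rewrite hct => h; nra.
have hct0 : 0 < ct by apply: lt_le_trans hepsct.
have hK0 : 0 <= K.
  have := @K_ge M N H (finset.set0); rewrite cards0; apply => i; by rewrite inE.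
have hK1 : K != 0 -> 1 <= K.
  move=> Kn0; case: (boolP [exists i, H i != 0]) => [/existsP [i hi]|hn].
    have := @K_ge M N H [set i]; rewrite cards1; apply => k; by rewrite inE => /eqP ->.
  exfalso; move/negP: Kn0; apply; apply/eqP; apply: K_zero => i.
  by move: hn; rewrite negb_exists => /forallP /(_ i); rewrite negbK => /eqP.
have hlnK : 0 <= ln (50 * K).
  have [->|Kn0] := eqVneq K 0; first by rewrite mulr0 ln0.
  apply: ln_ge0; have := hK1 Kn0; lra.
have hc0 : 0 <= c.
  apply: mulr_ge0; first by apply: divr_ge0 => //; exact: ltW.
  by rewrite div1r invr_ge0 mulr_ge0.
pose QPs (w : 'cV[R]_N) := exists beta : 'I_M -> bool,
       (forall i, qform (H i) w <= (beta i)%:R * eps + (1 - (beta i)%:R)) /\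
       \sum_(i < M) ((beta i)%:R : R) = Q%:R.
have main : forall X, psd X -> forall bt : 'I_M -> R,
    (forall i, \tr (H i *m X) <= bt i * eps + (1 - bt i)) -> \sum_i bt i = Q%:R ->
    (forall i, 0 <= bt i <= 1) -> exists2 w, QPs w & c * \tr X <= sqnorm w.
  move=> X hX bt hcons hsum hbt.
  have [B [hBc hBth]] := @rounding M Q bt hM hQ1 hQ2 hbt hsum.
  set kap := #|[set i | (0 < \tr (H i *m X))%R]|.
  set j := trunc_log 2 kap.
  set m := (8 + j)%N.
  have hm : (0 < m)%N by rewrite /m.
  have hk : (128 * kap <= 2 ^ m)%N.
    exact: hk_aux.
  have [w0 [hw1 hw2]] := @key M N X H m (@psd_psd' N X hX) (fun i => @psd_psd' N (H i) (hH i)) hm hk.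
  have h4m : 0 < (4 * m)%:R :> R by rewrite ltr0n muln_gt0 hm.
  set lam := Num.sqrt (eps / ((4 * m)%:R * ct)).
  have hlam : lam ^+ 2 = eps / ((4 * m)%:R * ct).
    by rewrite sqr_sqrtr // divr_ge0 ?mulr_ge0 ?ltW.
  exists (lam *: w0).
    exists (fun i => i \in B); split.
      move=> i; rewrite qformZ hlam.
      have hq : eps / ((4 * m)%:R * ct) * qform (H i) w0 <= eps / ct * \tr (H i *m X).
        apply: le_trans (ler_wpM2l _ (hw1 i)) _.
          by apply: divr_ge0; [exact: ltW | apply: mulr_ge0; exact: ltW].
        apply: eqle; field.
        by apply/andP; split; apply: lt0r_neq0.
      apply: le_trans hq _.
      have hs := hcons i.
      have [hb0 hb1] := andP (hbt i).
      case hi: (i \in B) => /=.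
        rewrite mul1r subrr addr0.
        have hbi := hBth i hi.
        have hsct : \tr (H i *m X) <= ct.
          have e1 : 0 <= bt i - th by rewrite subr_ge0; exact: hbi.
          have e2 : 0 <= 1 - eps by lra.
          have := mulr_ge0 e1 e2; rewrite hct => hp; nra.
        rewrite mulrAC ler_pdivrMr // ler_pM2l //.
      rewrite mul0r add0r subr0.
      have hs1 : \tr (H i *m X) <= 1 by nra.
      have he : eps / ct <= 1 by rewrite ler_pdivrMr // mul1r.
      apply: le_trans (ler_wpM2l _ hs1) _; first by apply: divr_ge0 => //; exact: ltW.
      by rewrite mulr1.
    have -> : \sum_(i < M) (((i \in B) : nat)%:R : R) = \sum_(i in B) 1.
      by rewrite [RHS]big_mkcond /=; apply: eq_bigr => i _; case: (i \in B).
    by rewrite sumr_const hBc.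
  rewrite sqnormZ hlam.
  have hT0 : 0 <= \tr X.
    by apply: sumr_ge0 => i _; apply: psd_diag; exact: psd_psd'.
  have hkK : kap%:R <= K.
    apply: K_ge => i; rewrite inE; apply: contraTneq => ->.
    by rewrite mul0mx mxtrace0 ltxx.
  have hcb := @const_bound K kap hK0 hkK hK1.
  apply: (@le_trans _ _ (eps / ct * ((8 * m)%:R)^-1 * \tr X)).
    rewrite /c; apply: ler_wpM2r => //; apply: ler_wpM2l => //.
    by apply: divr_ge0 => //; exact: ltW.
  apply: (@le_trans _ _ (eps / ((4 * m)%:R * ct) * (\tr X / 2))).
    apply: eqle; rewrite (natrM _ 8) (natrM _ 4); field.
    by rewrite !lt0r_neq0 // ltr0n.
  apply: ler_wpM2l => //; apply: divr_ge0; [exact: ltW | apply: mulr_ge0; exact: ltW].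
have hQM0 : (0 < M)%N by exact: ltnW hM.
have [w00 hw00 _] : exists2 w, QPs w & c * \tr (0 : 'M[R]_N) <= sqnorm w.
  apply: (main 0 _ (fun _ => Q%:R / M%:R)).
  - split; first by rewrite trmx0.
    by move=> x; rewrite mulmx0 mul0mx mxE.
  - move=> i; rewrite mulmx0 mxtrace0.
    have hQM' : Q%:R / M%:R <= 1 :> R by rewrite ler_pdivrMr ?ltr0n // mul1r; lra.
    have hQM'' : 0 <= Q%:R / M%:R :> R by rewrite divr_ge0.
    nra.
  - rewrite sumr_const card_ord.
    have -> : (Q%:R / M%:R) *+ M = M%:R * (Q%:R / M%:R) :> R by rewrite [RHS]mulr_natl.
    by field; rewrite pnatr_eq0 -lt0n.
  - move=> i; rewrite divr_ge0 //= ler_pdivrMr ?ltr0n // mul1r; lra.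
rewrite /v_SDP /v_QP.
have [c0|cn0] := eqVneq c 0.
  rewrite c0 mul0e; apply: ereal_sup_ge; exists (sqnorm w00)%:E; first by exists w00.
  by rewrite lee_fin; apply: sumr_ge0 => j _; exact: sqr_ge0.
have hcp : 0 < c by rewrite lt0r cn0 hc0.
apply: sup_scale => // _ [X [hX [bt [hb1 [hb2 hb3]]]] <-].
have [w hw hcw] := main X hX bt hb1 hb2 hb3.
exists (sqnorm w)%:E; first by exists w.
by rewrite -EFinM lee_fin.
Qed.


End Main.

Theorem theorem3p3 (R : realType) (N M Q : nat) (eps : R)
  (H : 'I_M -> 'M[R]_N)
  (hN : (2 <= N)%N) (hM : (2 <= M)%N) (hQ1 : (1 <= Q)%N) (hQ2 : (Q <= M - 1)%N)
  (heps0 : 0 < eps) (heps1 : eps < 1)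
  (hH : forall i, psd (H i)) :
  (((eps / ctilde M Q eps) * (1 / (200 * ln (50 * K_of H))))%:E
     * v_SDP Q eps H <= v_QP Q eps H)%E.
Proof. exact: main_thm. Qed.
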